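(* Let $M$ be a right $R$-module with $S=\mathrm{End}_R(M)$, and consider: (i) $S$ is a right coherent ring and $M$ is flat as a left $S$-module; (ii) $M$ is $M$-coherent. Then (i)$\Rightarrow$(ii). If moreover $M$ is intrinsically projective, then (i) and (ii) are equivalent.
   Context: $M$ is regarded as a left $S$-module via evaluation. $M^{(n)}$ denotes the direct sum of $n$ copies of $M$. A module $N$ is finitely $M$-generated if there is an epimorphism $M^{(n)}\to N$ for some $n>0$. A finitely $M$-generated module $N$ is $M$-coherent if for every $n>0$ and every homomorphism $\rho:M^{(n)}\to N$, $\ker\rho$ is finitely $M$-generated. A ring $S$ is right coherent if every finitely generated right ideal is finitely presented. $M$ is intrinsically projective if for every integer $n>0$, every submodule $N\le M$, every epimorphism $\alpha:M^{(n)}\to N$ and every homomorphism $\beta:M\to N$, there exists $\gamma:M\to M^{(n)}$ with $\alpha\gamma=\beta$. *)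

(* Defs.v *)
From HB Require Import structures.
From mathcomp Require Import all_boot all_order all_algebra.
Set Implicit Arguments. Unset Strict Implicit. Unset Printing Implicit Defensive.
Import GRing.Theory.
Local Open Scope ring_scope.

(* A right R-module M is modelled as a left module over the converse ring R^c:
   m.r := r *: m.  Elements of S = End_R(M) are functions M -> M that are
   R-linear; multiplication in S is composition (s t = s \o t), so M is a
   left S-module via evaluation. *)

Section Defs.
Variables (R : nzRingType) (M : lmodType R^c).

Definition rlinear (U V : lmodType R^c) (f : U -> V) : Prop :=
  forall (r : R^c) (x y : U), f (r *: x + y) = r *: f x + f y.

Notation Mn n := {ffun 'I_n -> M}.

Definition isEnd (s : M -> M) : Prop := rlinear s.

Definition submodule (V : lmodType R^c) (P : V -> Prop) : Prop :=
  P 0 /\ forall (r : R^c) x y, P x -> P y -> P (r *: x + y).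

Definition fin_M_gen (V : lmodType R^c) (P : V -> Prop) : Prop :=
  exists m : nat, (0 < m)%N /\ exists phi : Mn m -> V,
    rlinear phi /\ forall y, P y <-> exists z, phi z = y.

Definition M_coherent (V : lmodType R^c) (P : V -> Prop) : Prop :=
  fin_M_gen P /\
  forall (n : nat) (rho : Mn n -> V), (0 < n)%N -> rlinear rho ->
    (forall z, P (rho z)) -> fin_M_gen (fun y : Mn n => rho y = 0).

Definition intrinsically_projective : Prop :=
  forall (n : nat) (N : M -> Prop) (alpha : Mn n -> M) (beta : M -> M),
    (0 < n)%N -> submodule N ->
    rlinear alpha -> (forall y, N y <-> exists z, alpha z = y) ->
    rlinear beta -> (forall x, N (beta x)) ->
    exists gamma : M -> Mn n, rlinear gamma /\ forall x, alpha (gamma x) = beta x.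

Definition right_ideal_gen (k : nat) (g : 'I_k -> M -> M) (s : M -> M) : Prop :=
  exists t : 'I_k -> M -> M, (forall j, isEnd (t j)) /\
    forall x, s x = \sum_(j < k) g j (t j x).

(* the right ideal I (as a right S-module) is finitely presented: there is an
   exact sequence S^m -> S^k -> I -> 0 *)
Definition fin_presented_right_ideal (I : (M -> M) -> Prop) : Prop :=
  exists (k : nat) (g : 'I_k -> M -> M),
    (forall j, isEnd (g j)) /\
    (forall s, I s <-> right_ideal_gen g s) /\
    exists (m : nat) (v : 'I_m -> 'I_k -> M -> M),
      (forall l j, isEnd (v l j)) /\
      forall t : 'I_k -> M -> M, (forall j, isEnd (t j)) ->
        ((forall x, \sum_(j < k) g j (t j x) = 0) <->
         exists u : 'I_m -> M -> M, (forall l, isEnd (u l)) /\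
           forall j x, t j x = \sum_(l < m) v l j (u l x)).

Definition S_right_coherent : Prop :=
  forall (k : nat) (g : 'I_k -> M -> M), (forall j, isEnd (g j)) ->
    fin_presented_right_ideal (right_ideal_gen g).

Definition right_S_action (A : zmodType) (act : A -> (M -> M) -> A) : Prop :=
  (forall a b s, isEnd s -> act (a + b) s = act a s + act b s) /\
  (forall a s t, isEnd s -> isEnd t -> act a (fun x => s x + t x) = act a s + act a t) /\
  (forall a s t, isEnd s -> isEnd t -> act a (s \o t) = act (act a s) t) /\
  (forall a, act a id = a).

Definition S_balanced (A : zmodType) (act : A -> (M -> M) -> A)
    (G : zmodType) (beta : A -> M -> G) : Prop :=
  (forall a b x, beta (a + b) x = beta a x + beta b x) /\
  (forall a x y, beta a (x + y) = beta a x + beta a y) /\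
  (forall a s x, isEnd s -> beta (act a s) x = beta a (s x)).

(* \sum_k a_k (x) x_k = 0 in A (x)_S M, characterized by the universal
   property of the tensor product *)
Definition tensor_zero (A : zmodType) (act : A -> (M -> M) -> A)
    (n : nat) (a : 'I_n -> A) (x : 'I_n -> M) : Prop :=
  forall (G : zmodType) (beta : A -> M -> G), S_balanced act beta ->
    \sum_(k < n) beta (a k) (x k) = 0.

(* M is flat as a left S-module: - (x)_S M preserves monomorphisms *)
Definition flat_left_S : Prop :=
  forall (A : zmodType) (actA : A -> (M -> M) -> A)
         (B : zmodType) (actB : B -> (M -> M) -> B) (f : A -> B),
    right_S_action actA -> right_S_action actB ->
    (forall a b, f (a + b) = f a + f b) ->
    (forall a s, isEnd s -> f (actA a s) = actB (f a) s) ->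
    injective f ->
    forall (n : nat) (a : 'I_n -> A) (x : 'I_n -> M),
      tensor_zero actB (fun k => f (a k)) x -> tensor_zero actA a x.

End Defs.

(* Main.v *)
From HB Require Import structures.
Require Import Defs.
From mathcomp Require Import all_boot all_order all_algebra zify.
From mathcomp Require Import boolp.
Set Implicit Arguments. Unset Strict Implicit. Unset Printing Implicit Defensive.
Import GRing.Theory.
Local Open Scope ring_scope.


Section Quot.
Variables (T : Type) (z : T) (o : T -> T) (a : T -> T -> T) (eqv : T -> T -> Prop).
Hypothesis eqv_refl : forall x, eqv x x.
Hypothesis eqv_sym : forall x y, eqv x y -> eqv y x.
Hypothesis eqv_trans : forall x y w, eqv x y -> eqv y w -> eqv x w.
Hypothesis a_congr : forall x x' y y', eqv x x' -> eqv y y' -> eqv (a x y) (a x' y').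
Hypothesis o_congr : forall x x', eqv x x' -> eqv (o x) (o x').
Hypothesis aA : forall x y w, eqv (a x (a y w)) (a (a x y) w).
Hypothesis aC : forall x y, eqv (a x y) (a y x).
Hypothesis a0 : forall x, eqv (a z x) x.
Hypothesis aN : forall x, eqv (a (o x) x) z.

Record Qt := MkQ { qcls : T -> Prop; qcls_ok : exists t, qcls = eqv t }.
Definition cls (t : T) : Qt := @MkQ (eqv t) (ex_intro _ t erefl).

Lemma Qt_ext (p q : Qt) : qcls p = qcls q -> p = q.
Proof.
case: p q => [P HP] [Q HQ] /= E; subst Q; congr MkQ; exact: Prop_irrelevance.
Qed.

Lemma cls_eq t u : eqv t u -> cls t = cls u.
Proof.
move=> H; apply: Qt_ext => /=; apply: funext => v; apply: propext; split => Hv.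
  by apply: eqv_trans (eqv_sym H) Hv.
by apply: eqv_trans H Hv.
Qed.

Lemma cls_inj t u : cls t = cls u -> eqv t u.
Proof. by move=> /(congr1 qcls) /= E; rewrite E. Qed.

Definition rep (q : Qt) : T := projT1 (cid (qcls_ok q)).
Lemma repK q : cls (rep q) = q.
Proof. by apply: Qt_ext; rewrite /rep; case: cid => t /= ->. Qed.
Lemma rep_cls t : eqv (rep (cls t)) t.
Proof. apply: cls_inj; exact: repK. Qed.

Definition qadd p q := cls (a (rep p) (rep q)).
Definition qopp p := cls (o (rep p)).
Definition qzero := cls z.

Lemma qaddE t u : qadd (cls t) (cls u) = cls (a t u).
Proof. by apply: cls_eq; apply: a_congr; apply: rep_cls. Qed.
Lemma qoppE t : qopp (cls t) = cls (o t).
Proof. by apply: cls_eq; apply: o_congr; apply: rep_cls. Qed.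

Lemma qaddA : associative qadd.
Proof.
move=> p q r; rewrite -(repK p) -(repK q) -(repK r) !qaddE; apply: cls_eq; exact: aA.
Qed.
Lemma qaddC : commutative qadd.
Proof. move=> p q; rewrite -(repK p) -(repK q) !qaddE; apply: cls_eq; exact: aC. Qed.
Lemma qadd0 : left_id qzero qadd.
Proof. move=> p; rewrite -(repK p) /qzero qaddE; apply: cls_eq; exact: a0. Qed.
Lemma qaddN : left_inverse qzero qopp qadd.
Proof. move=> p; rewrite -(repK p) qoppE qaddE; apply: cls_eq; exact: aN. Qed.

HB.instance Definition _ := gen_eqMixin Qt.
HB.instance Definition _ := gen_choiceMixin Qt.
HB.instance Definition _ := GRing.isZmodule.Build Qt qaddA qaddC qadd0 qaddN.

Definition QZ : zmodType := Qt.
Definition qcl (t : T) : QZ := cls t.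
Lemma qcl_add t u : qcl (a t u) = qcl t + qcl u.
Proof. by rewrite /qcl -qaddE. Qed.
Lemma qcl_zero : qcl z = 0.
Proof. by []. Qed.
Lemma qcl_eq t u : eqv t u -> qcl t = qcl u.
Proof. exact: cls_eq. Qed.
Lemma qcl_inj t u : qcl t = qcl u -> eqv t u.
Proof. exact: cls_inj. Qed.
End Quot.


Section Basics.
Variables (R : nzRingType).
Implicit Types (V W : lmodType R^c).

Section F.
Variables (V W : lmodType R^c) (f : V -> W) (Hf : rlinear f).
Lemma rlinD x y : f (x + y) = f x + f y.
Proof. by rewrite -[x in LHS]scale1r Hf scale1r. Qed.
Lemma rlin0 : f 0 = 0.
Proof. by have := rlinD 0 0; rewrite addr0 => /(congr1 (fun v => v - f 0)); rewrite addrK subrr. Qed.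
Lemma rlinN x : f (- x) = - f x.
Proof. by apply/eqP; rewrite -addr_eq0 -rlinD addNr rlin0. Qed.
Lemma rlinB x y : f (x - y) = f x - f y.
Proof. by rewrite rlinD rlinN. Qed.
Lemma rlinZ r x : f (r *: x) = r *: f x.
Proof. by rewrite -[r *: x]addr0 Hf rlin0 addr0. Qed.
Lemma rlin_sum I (s : seq I) (P : pred I) (F : I -> V) :
  f (\sum_(i <- s | P i) F i) = \sum_(i <- s | P i) f (F i).
Proof. exact: (big_morph f rlinD rlin0). Qed.
End F.

Lemma rlin_id V : rlinear (@id V).
Proof. by []. Qed.
Lemma rlin_comp V1 V2 V3 (f : V2 -> V3) (g : V1 -> V2) :
  rlinear f -> rlinear g -> rlinear (f \o g).
Proof. by move=> Hf Hg r x y /=; rewrite Hg Hf. Qed.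
Lemma rlin_compf V1 V2 V3 (f : V2 -> V3) (g : V1 -> V2) :
  rlinear f -> rlinear g -> rlinear (fun x => f (g x)).
Proof. exact: rlin_comp. Qed.
Lemma rlin_add V W (f g : V -> W) :
  rlinear f -> rlinear g -> rlinear (fun x => f x + g x).
Proof.
move=> Hf Hg r x y; rewrite Hf Hg scalerDr.
by rewrite -!addrA; congr (_ + _); rewrite addrCA.
Qed.
Lemma rlin_opp V W (f : V -> W) : rlinear f -> rlinear (fun x => - f x).
Proof. by move=> Hf r x y; rewrite Hf opprD scalerN. Qed.
Lemma rlin_sub V W (f g : V -> W) :
  rlinear f -> rlinear g -> rlinear (fun x => f x - g x).
Proof. by move=> Hf Hg; apply: rlin_add => //; apply: rlin_opp. Qed.
Lemma rlin_zero V W : rlinear (fun _ : V => (0 : W)).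
Proof. by move=> r x y; rewrite scaler0 addr0. Qed.
Lemma rlin_ext V W (f g : V -> W) : f =1 g -> rlinear f -> rlinear g.
Proof. by move=> E Hf r x y; rewrite -!E. Qed.
Lemma rlin_sumf V W I (s : seq I) (F : I -> V -> W) :
  (forall i, rlinear (F i)) -> rlinear (fun x => \sum_(i <- s) F i x).
Proof.
move=> HF; elim: s => [|i s IH].
  by apply: (rlin_ext _ (@rlin_zero V W)) => x; rewrite big_nil.
by apply: (rlin_ext _ (rlin_add (HF i) IH)) => x; rewrite big_cons.
Qed.
Lemma rlin_ffun V W n (F : 'I_n -> V -> W) :
  (forall i, rlinear (F i)) -> rlinear (fun x => [ffun i => F i x]).
Proof. by move=> HF r x y; apply/ffunP => i; rewrite !ffunE HF. Qed.
Lemma rlin_coord W n (i : 'I_n) : rlinear (fun z : {ffun 'I_n -> W} => z i).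
Proof. by move=> r x y; rewrite !ffunE. Qed.
Lemma rlin_app V W n (phi : V -> {ffun 'I_n -> W}) i :
  rlinear phi -> rlinear (fun z => phi z i).
Proof. by move=> H r x y; rewrite H !ffunE. Qed.
End Basics.


Section MM.
Variables (R : nzRingType) (M : lmodType R^c).
Local Notation Mn n := {ffun 'I_n -> M}.

Lemma ffunBM n (u v : Mn n) i : (u - v) i = u i - v i.
Proof. by rewrite !ffunE; reflexivity. Qed.
Lemma ffunDM n (u v : Mn n) i : (u + v) i = u i + v i.
Proof. by rewrite !ffunE; reflexivity. Qed.
Lemma ffunNM n (v : Mn n) i : (- v) i = - v i.
Proof. by rewrite !ffunE; reflexivity. Qed.
Lemma ffunZM n r (v : Mn n) i : (r *: v) i = r *: v i.
Proof. by rewrite !ffunE; reflexivity. Qed.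
Lemma ffun0M n i : (0 : Mn n) i = 0.
Proof. by rewrite !ffunE; reflexivity. Qed.

Definition delta n (j : 'I_n) (x : M) : Mn n := [ffun i => if i == j then x else 0].
Lemma rlin_delta n (j : 'I_n) : rlinear (delta j).
Proof.
move=> r x y; apply/ffunP => i; rewrite !ffunE; case: eqP => _ //.
by rewrite scaler0 addr0.
Qed.
Lemma delta_expand n (z : Mn n) : z = \sum_j delta j (z j).
Proof.
apply/ffunP => i; rewrite sum_ffunE (bigD1 i) //= ffunE eqxx big1 ?addr0 //.
by move=> j /negPf ji; rewrite ffunE eq_sym ji.
Qed.
Lemma expand (W : lmodType R^c) n (phi : Mn n -> W) (z : Mn n) :
  rlinear phi -> phi z = \sum_j phi (delta j (z j)).
Proof. by move=> Hp; rewrite {1}(delta_expand z) (rlin_sum Hp). Qed.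
Lemma expand_coord m n (phi : Mn m -> Mn n) (z : Mn m) i :
  rlinear phi -> phi z i = \sum_j phi (delta j (z j)) i.
Proof. by move=> Hp; rewrite (expand z Hp) sum_ffunE. Qed.
Lemma delta_coord n (j : 'I_n) x : delta j x j = x.
Proof. by rewrite ffunE eqxx. Qed.
Lemma Mn0_eq (z z' : Mn 0) : z = z'.
Proof. by apply/ffunP => -[]. Qed.

Lemma rho_sum n (rho : Mn n -> M) z : rlinear rho ->
  rho z = \sum_j (fun x => rho (delta j x)) (z j).
Proof. by move=> H; rewrite (expand z H). Qed.
End MM.


Section Lift.
Variables (R : nzRingType) (M : lmodType R^c).
Local Notation Mn n := {ffun 'I_n -> M}.
Hypothesis Hcoh : forall n (rho : Mn n -> M), (0 < n)%N -> rlinear rho ->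
  fin_M_gen M (fun y : Mn n => rho y = 0).
Hypothesis HIP : intrinsically_projective M.

Lemma lift k : forall m (phi : Mn m -> Mn k) (T : M -> Mn k),
  rlinear phi -> rlinear T -> (forall x, exists z, phi z = T x) ->
  exists u : M -> Mn m, rlinear u /\ forall x, phi (u x) = T x.
Proof.
elim: k => [|k IH] m phi T Hphi HT Hex.
  by exists (fun _ => 0); split; [exact: rlin_zero | move=> x; apply: Mn0_eq].
case: m phi Hphi Hex => [|m'] phi Hphi Hex.
  exists (fun _ => 0); split; first exact: rlin_zero.
  by move=> x; have [z <-] := Hex x; congr phi; apply: Mn0_eq.
pose alpha := fun z : Mn m'.+1 => phi z ord_max.
pose beta := fun x => T x ord_max.
have Ha : rlinear alpha by apply: rlin_app.
have Hb : rlinear beta by apply: rlin_app.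
have [gamma [Hg Hag]] : exists gamma : M -> Mn m'.+1,
    rlinear gamma /\ forall x, alpha (gamma x) = beta x.
  apply: (@HIP m'.+1 (fun y => exists z, alpha z = y) alpha beta (ltn0Sn _) _ Ha _ Hb) => //.
  - rewrite /submodule; split; first by exists 0; rewrite (rlin0 Ha).
    by move=> r _ _ [zx <-] [zy <-]; exists (r *: zx + zy); rewrite Ha.
  - by move=> x; have [z Hz] := Hex x; exists z; rewrite /alpha Hz.
have [m1 [Hm1 [psi [Hpsi Hker]]]] := Hcoh (ltn0Sn m') Ha.
pose wi := fun i : 'I_k => widen_ord (leqnSn k) i.
pose phi' := fun z => [ffun i => phi (psi z) (wi i)].
pose T' := fun x => [ffun i => T x (wi i) - phi (gamma x) (wi i)].
have [u' [Hu' Heq']] : exists u' : M -> Mn m1, rlinear u' /\ forall x, phi' (u' x) = T' x.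
  apply: IH.
  - apply: rlin_ffun => i; apply: (@rlin_app _ _ _ _ (fun z => phi (psi z))).
    exact: rlin_comp.
  - apply: rlin_ffun => i; apply: rlin_sub; first exact: rlin_app.
    by apply: (@rlin_app _ _ _ _ (fun x => phi (gamma x))); apply: rlin_comp.
  - move=> x; have [z0 Hz0] := Hex x.
    have : alpha (z0 - gamma x) = 0 by rewrite (rlinB Ha) Hag /alpha Hz0 subrr.
    move=> /Hker [z1 Hz1]; exists z1; apply/ffunP => i.
    by rewrite /phi' /T' !ffunE Hz1 (rlinB Hphi z0 (gamma x)) ffunBM Hz0.
exists (fun x => gamma x + psi (u' x)); split.
  by apply: rlin_add => //; apply: rlin_comp.
move=> x; apply/ffunP => i; rewrite (rlinD Hphi) ffunDM.
have [->|ne] := eqVneq i ord_max.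
  have -> : phi (psi (u' x)) ord_max = 0 by apply/Hker; exists (u' x).
  by rewrite addr0; apply: Hag.
have lt : (i < k)%N.
  by move: (ltn_ord i) ne; rewrite ltnS leq_eqVlt => /orP [/eqP E|//]; rewrite -val_eqE /= E eqxx.
have -> : i = wi (Ordinal lt) by apply: val_inj.
have := congr1 (fun f : Mn k => f (Ordinal lt)) (Heq' x); rewrite /phi' /T' !ffunE => ->.
by rewrite addrC subrK.
Qed.

Lemma S_coh_of : S_right_coherent M.
Proof.
move=> k g Hg; exists k, g; split => //; split => //.
case: k g Hg => [|k] g Hg.
  exists 0%N, (fun _ _ => id); split; first by case.
  move=> t Ht; split.
    by move=> _; exists (fun _ => id); split => //; case.
  by move=> _ x; rewrite big_ord0.
pose rho := fun z : Mn k.+1 => \sum_j g j (z j).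
have Hrho : rlinear rho.
  apply: rlin_sumf => j; exact: (rlin_compf (Hg j) (rlin_coord j)).
have [m [Hm [phi [Hphi Hker]]]] := Hcoh (ltn0Sn k) Hrho.
exists m, (fun l j x => phi (delta l x) j); split.
  move=> l j; apply: (rlin_app j (phi := fun x => phi (delta l x))).
  apply: rlin_comp => //; exact: rlin_delta.
move=> t Ht; split.
  move=> Hsum.
  pose T := fun x => [ffun j => t j x].
  have HT : rlinear T by apply: rlin_ffun.
  have [u [Hu Heq]] : exists u : M -> Mn m, rlinear u /\ forall x, phi (u x) = T x.
    apply: lift => // x; apply/Hker; rewrite /rho /T.
    by under eq_bigr do rewrite ffunE; exact: Hsum.
  exists (fun l x => u x l); split.
    by move=> l; apply: (rlin_app l (phi := u)).
  by move=> j x; rewrite -(expand_coord _ _ Hphi) Heq ffunE.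
move=> [u [Hu Ht']] x.
have E : phi [ffun l => u l x] = [ffun j => t j x].
  by apply/ffunP => j; rewrite (expand_coord _ _ Hphi) ffunE Ht'; apply: eq_bigr => l _; rewrite ffunE.
have : rho (phi [ffun l => u l x]) = 0 by apply/Hker; eexists.
by rewrite E /rho => H; rewrite -[X in _ = X]H; apply: eq_bigr => j _; rewrite ffunE.
Qed.
End Lift.


Section Act.
Variables (R : nzRingType) (M : lmodType R^c).
Variables (B : zmodType) (act : B -> (M -> M) -> B).
Hypothesis Hact : right_S_action act.

Lemma actDl a b s : isEnd s -> act (a + b) s = act a s + act b s.
Proof. by move: Hact => [H _]; apply: H. Qed.
Lemma actDr a s t : isEnd s -> isEnd t -> act a (fun x => s x + t x) = act a s + act a t.
Proof. by move: Hact => [_ [H _]]; apply: H. Qed.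
Lemma actC a s t : isEnd s -> isEnd t -> act a (fun x => s (t x)) = act (act a s) t.
Proof. by move: Hact => [_ [_ [H _]]]; apply: H. Qed.
Lemma act1 a : act a id = a.
Proof. by move: Hact => [_ [_ [_ H]]]; apply: H. Qed.
Lemma act0l s : isEnd s -> act 0 s = 0.
Proof.
move=> Hs; have := actDl 0 0 Hs; rewrite addr0.
by move=> /(congr1 (fun v => v - act 0 s)); rewrite addrK subrr.
Qed.
Lemma actNl a s : isEnd s -> act (- a) s = - act a s.
Proof. by move=> Hs; apply/eqP; rewrite -addr_eq0 -actDl // addNr act0l. Qed.
Lemma act_suml I (r : seq I) (F : I -> B) s : isEnd s ->
  act (\sum_(i <- r) F i) s = \sum_(i <- r) act (F i) s.
Proof.
move=> Hs; elim: r => [|i r IH]; first by rewrite !big_nil act0l.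
by rewrite !big_cons actDl // IH.
Qed.
Lemma act0r a : act a (fun _ => 0) = 0.
Proof.
have := @actDr a (fun _ => 0) (fun _ => 0) (@rlin_zero _ _ _) (@rlin_zero _ _ _).
have -> : (fun _ : M => (0 : M) + 0) = (fun _ => 0) by apply: funext => x; rewrite addr0.
by move=> /(congr1 (fun v => v - act a (fun _ => 0))); rewrite addrK subrr.
Qed.
Lemma actNr a s : isEnd s -> act a (fun x => - s x) = - act a s.
Proof.
move=> Hs; apply/eqP; rewrite -addr_eq0 addrC -actDr //; last exact: rlin_opp.
have -> : (fun x => s x + - s x) = (fun _ => 0) by apply: funext => x; rewrite subrr.
by rewrite act0r.
Qed.
Lemma act_sumr a I (r : seq I) (F : I -> M -> M) :
  (forall i, isEnd (F i)) ->
  act a (fun x => \sum_(i <- r) F i x) = \sum_(i <- r) act a (F i).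
Proof.
move=> HF; elim: r => [|i r IH].
  rewrite big_nil -(act0r a); congr act; apply: funext => x; by rewrite big_nil.
have -> : (fun x => \sum_(j <- i :: r) F j x) = (fun x => F i x + \sum_(j <- r) F j x).
  by apply: funext => x; rewrite big_cons.
by rewrite actDr // ?IH ?big_cons //; apply: rlin_sumf.
Qed.
Lemma act_ext a s t : s =1 t -> act a s = act a t.
Proof. by move=> E; congr act; apply: funext. Qed.
End Act.


Definition Rows (T : Type) (m : nat) := 'I_m -> T -> T.
HB.instance Definition _ (T : Type) (m : nat) := gen_eqMixin (Rows T m).

Section Triv.
Variables (R : nzRingType) (M : lmodType R^c).
Local Notation Mn n := {ffun 'I_n -> M}.
Variables (B : zmodType) (act : B -> (M -> M) -> B).
Hypothesis Hact : right_S_action act.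

Definition Triv (s : seq (B * M)) : Prop :=
  exists m (y : 'I_m -> M) (w : seq (B * M * Rows M m)),
  perm_eq (map fst w) s /\
  (forall e, e \in w -> (forall l, isEnd (e.2 l)) /\ e.1.2 = \sum_l e.2 l (y l)) /\
  (forall l, \sum_(e <- w) act e.1.1 (e.2 l) = 0).

Definition sopp (s : seq (B * M)) := [seq (p.1, - p.2) | p <- s].

Lemma Triv_nil : Triv [::].
Proof.
exists 0%N, (fun _ => 0), [::]; split => //; split => //.
by move=> l; rewrite big_nil.
Qed.

Lemma Triv_perm s s' : perm_eq s s' -> Triv s -> Triv s'.
Proof.
move=> P [m [y [w [P1 H]]]]; exists m, y, w; split => //.
exact: perm_trans P1 P.
Qed.

Lemma Triv_cat s1 s2 : Triv s1 -> Triv s2 -> Triv (s1 ++ s2).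
Proof.
move=> [m1 [y1 [w1 [P1 [H1 S1]]]]] [m2 [y2 [w2 [P2 [H2 S2]]]]].
pose y := fun l : 'I_(m1 + m2) => match split l with inl l1 => y1 l1 | inr l2 => y2 l2 end.
pose ext1 := fun (r : Rows M m1) (l : 'I_(m1 + m2)) =>
  match split l with inl l1 => r l1 | inr _ => fun _ : M => 0 : M end.
pose ext2 := fun (r : Rows M m2) (l : 'I_(m1 + m2)) =>
  match split l with inl _ => fun _ : M => 0 : M | inr l2 => r l2 end.
have sl : forall l1, split (lshift m2 l1) = inl l1 := fun l1 => unsplitK (inl _ l1).
have sr : forall l2, split (rshift m1 l2) = inr l2 := fun l2 => unsplitK (inr _ l2).
exists (m1 + m2)%N, y,
  ([seq (e.1, (ext1 e.2 : Rows M _)) | e <- w1] ++ [seq (e.1, (ext2 e.2 : Rows M _)) | e <- w2]).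
split.
  rewrite map_cat -!map_comp; apply: perm_cat; by rewrite (eq_map (g := fst)).
split.
  move=> e; rewrite mem_cat => /orP [] /mapP [e' He' ->] /=.
    have [Hr Hx] := H1 e' He'; split.
      by move=> l; rewrite /ext1; case: (split l) => [l1|l2]; [exact: Hr|exact: rlin_zero].
    rewrite Hx big_split_ord /= [X in _ = _ + X]big1 ?addr0; last by move=> l2 _; rewrite /ext1 sr.
    by apply: eq_bigr => l1 _; rewrite /ext1 /y sl.
  have [Hr Hx] := H2 e' He'; split.
    by move=> l; rewrite /ext2; case: (split l) => [l1|l2]; [exact: rlin_zero|exact: Hr].
  rewrite Hx big_split_ord /= [X in _ = X + _]big1 ?add0r; last by move=> l1 _; rewrite /ext2 sl.
  by apply: eq_bigr => l2 _; rewrite /ext2 /y sr.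
move=> l; rewrite big_cat !big_map /= /ext1 /ext2.
case: (split l) => [l1|l2].
  by rewrite S1 add0r big1 // => e _; rewrite act0r.
by rewrite S2 addr0 big1 // => e _; rewrite act0r.
Qed.

Lemma Triv_opp s : Triv s -> Triv (sopp s).
Proof.
move=> [m [y [w [P [H S]]]]].
exists m, y, [seq (((e.1.1, - e.1.2), (fun l v => - e.2 l v)) : B * M * Rows M m) | e <- w].
split.
  apply: (perm_trans _ (perm_map (fun p : B * M => (p.1, - p.2)) P)); rewrite -!map_comp; exact: perm_refl.
split.
  move=> e /mapP [e' He' ->] /=; have [Hr Hx] := H e' He'; split.
    by move=> l; apply: rlin_opp; apply: Hr.
  by rewrite Hx -sumrN.
move=> l; rewrite big_map /=.
rewrite (eq_big_seq (fun e => - act e.1.1 (e.2 l))); last first.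
  by move=> e He; apply: (actNr Hact); have [Hr _] := H e He; exact: Hr.
by rewrite sumrN S oppr0.
Qed.

Lemma sopp_cat s1 s2 : sopp (s1 ++ s2) = sopp s1 ++ sopp s2.
Proof. exact: map_cat. Qed.
Lemma soppK s : sopp (sopp s) = s.
Proof. by elim: s => [|[b x] s IH] //=; rewrite opprK IH. Qed.

Lemma Triv_pair b x : Triv [:: (b, x); (b, - x)].
Proof.
exists 1%N, (fun _ => x),
  [:: ((b, x), (fun _ => id) : Rows M 1); ((b, - x), (fun _ v => - v) : Rows M 1)].
split; first exact: perm_refl.
split.
  move=> e; rewrite !inE => /orP [] /eqP -> /=; split.
  - by move=> l; apply: rlin_id.
  - by rewrite big_ord1.
  - by move=> l; apply: rlin_opp; apply: rlin_id.
  - by rewrite big_ord1.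
move=> l; rewrite !big_cons big_nil /= addr0.
have -> : act b (fun v => - v) = - act b id by rewrite -(actNr Hact) //; apply: rlin_id.
by rewrite subrr.
Qed.

Lemma Triv_pairs u : Triv (u ++ sopp u).
Proof.
elim: u => [|[b x] u IH]; first exact: Triv_nil.
apply: (Triv_perm _ (Triv_cat (Triv_pair b x) IH)).
apply/permP => P; rewrite /= !count_cat /=; lia.
Qed.

End Triv.


Lemma sum3_eq0 (V : zmodType) (a b X : V) : a + (b + X) = 0 -> X = - (a + b).
Proof. by move=> H; apply/eqP; rewrite -addr_eq0 addrC -addrA H. Qed.

Section Cancel.
Variables (R : nzRingType) (M : lmodType R^c).
Local Notation Mn n := {ffun 'I_n -> M}.
Hypothesis Hcoh : forall n (rho : Mn n -> M), (0 < n)%N -> rlinear rho ->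
  fin_M_gen M (fun y : Mn n => rho y = 0).
Variables (B : zmodType) (act : B -> (M -> M) -> B).
Hypothesis Hact : right_S_action act.
Local Notation Triv := (Triv act).

Lemma Triv_cancel1 A b x : Triv (A ++ [:: (b, x); (b, - x)]) -> Triv A.
Proof.
move=> [m [y [w [P [H S]]]]].
have : (b, x) \in map fst w by rewrite (perm_mem P) mem_cat !inE eqxx orbT.
move=> /mapP [e1 He1 E1].
pose w1 := rem e1 w.
have P1 : perm_eq (map fst w1) (A ++ [:: (b, -x)]).
  have := perm_map fst (perm_to_rem He1); rewrite /= -E1 => Q.
  rewrite perm_sym in Q; have Q2 := perm_trans Q P.
  rewrite -(perm_cons (b, x)); apply: (perm_trans Q2).
  by apply/permP => p; rewrite /= !count_cat /=; lia.
have : (b, - x) \in map fst w1 by rewrite (perm_mem P1) mem_cat !inE eqxx orbT.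
move=> /mapP [e2 He2 E2].
pose w2 := rem e2 w1.
have P2 : perm_eq (map fst w2) A.
  have := perm_map fst (perm_to_rem He2); rewrite /= -E2 => Q.
  rewrite perm_sym in Q; have Q2 := perm_trans Q P1.
  rewrite -(perm_cons (b, - x)); apply: (perm_trans Q2).
  by apply/permP => p; rewrite /= !count_cat /=; lia.
have Mw2 : forall e, e \in w2 -> e \in w.
  by move=> e He; apply: (mem_rem (x := e1)); apply: (mem_rem (x := e2)).
have He2w : e2 \in w by apply: (mem_rem (x := e1)).
have Dsum : forall F : B * M * Rows M m -> B,
    \sum_(e <- w) F e = F e1 + (F e2 + \sum_(e <- w2) F e).
  by move=> F; rewrite (perm_big _ (perm_to_rem He1)) big_cons (perm_big _ (perm_to_rem He2)) big_cons.
have [Hr1 Hx1] := H e1 He1; have [Hr2 Hx2] := H e2 He2w.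
rewrite -E1 /= in Hx1; rewrite -E2 /= in Hx2.
have Eb1 : e1.1.1 = b by rewrite -E1.
have Eb2 : e2.1.1 = b by rewrite -E2.
case: (posnP m) => [m0|mpos].
  exists m, y, w2; split => //; split; first by move=> e He; apply: H; apply: Mw2.
  by move=> [k Hk]; exfalso; rewrite m0 in Hk.
pose r := e1.2; pose r' := e2.2.
pose q := fun z : Mn m => \sum_l (r l (z l) + r' l (z l)).
have Hq : rlinear q.
  apply: rlin_sumf => l; apply: rlin_add.
    exact: (rlin_compf (Hr1 l) (rlin_coord l)).
  exact: (rlin_compf (Hr2 l) (rlin_coord l)).
have [m1 [_ [psi [Hpsi Hker]]]] := Hcoh mpos Hq.
have qY : q [ffun l => y l] = 0.
  rewrite /q; under eq_bigr do rewrite ffunE.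
  by rewrite big_split /= -Hx1 -Hx2 subrr.
have [Y' HY'] := (Hker _).1 qY.
pose Psi := fun (l : 'I_m) (l' : 'I_m1) (v : M) => psi (delta l' v) l.
have HPsi : forall l l', isEnd (Psi l l').
  move=> l l'; apply: (rlin_app l (phi := fun v => psi (delta l' v))).
  exact: (rlin_comp Hpsi (rlin_delta l')).
exists m1, (fun l' => Y' l'),
  [seq ((e.1, (fun l' v => \sum_l e.2 l (Psi l l' v))) : B * M * Rows M m1) | e <- w2].
split; first by rewrite -map_comp; exact: P2.
split.
  move=> e /mapP [e0 He0 ->] /=; have [Hr Hx] := H e0 (Mw2 _ He0); split.
    move=> l'; apply: rlin_sumf => l; exact: (rlin_compf (Hr l) (HPsi l l')).
  rewrite Hx exchange_big /=; apply: eq_bigr => l _.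
  rewrite -(rlin_sum (Hr l)); congr (e0.2 l).
  by rewrite /Psi -(expand_coord Y' l Hpsi) HY' ffunE.
move=> l'; rewrite big_map /=.
rewrite (eq_big_seq (fun e => \sum_l act (act e.1.1 (e.2 l)) (Psi l l'))); last first.
  move=> e He; have [Hr _] := H e (Mw2 _ He).
  rewrite (@act_sumr _ _ _ _ Hact _ _ _ (fun l v => e.2 l (Psi l l' v))); last first.
    by move=> l; exact: (rlin_compf (Hr l) (HPsi l l')).
  by apply: eq_bigr => l _; apply: (actC Hact).
rewrite exchange_big /=.
rewrite (eq_bigr (fun l => act (- (act b (r l) + act b (r' l))) (Psi l l'))); last first.
  move=> l _; rewrite -(act_suml Hact) //; congr act.
  have := S l; rewrite Dsum Eb1 Eb2; exact: sum3_eq0.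
rewrite (eq_bigr (fun l => - act b (fun v => r l (Psi l l' v) + r' l (Psi l l' v)))); last first.
  move=> l _; rewrite (actNl Hact) // (actDl Hact) // -!(actC Hact) //.
  by rewrite -(actDr Hact) //; [exact: (rlin_compf (Hr1 l) (HPsi l l')) | exact: (rlin_compf (Hr2 l) (HPsi l l'))].
rewrite sumrN -(@act_sumr _ _ _ _ Hact _ _ _ (fun l v => r l (Psi l l' v) + r' l (Psi l l' v))); last first.
  move=> l; apply: rlin_add; [exact: (rlin_compf (Hr1 l) (HPsi l l')) | exact: (rlin_compf (Hr2 l) (HPsi l l'))].
rewrite (@act_ext _ _ _ act b _ (fun _ => 0)) ?act0r ?oppr0 // => v.
by apply/(Hker (psi (delta l' v))).2; exists (delta l' v).
Qed.
End Cancel.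


Section TZ.
Variables (R : nzRingType) (M : lmodType R^c).
Local Notation Mn n := {ffun 'I_n -> M}.
Hypothesis Hcoh : forall n (rho : Mn n -> M), (0 < n)%N -> rlinear rho ->
  fin_M_gen M (fun y : Mn n => rho y = 0).
Variables (B : zmodType) (act : B -> (M -> M) -> B).
Hypothesis Hact : right_S_action act.
Local Notation Triv := (Triv act).
Local Notation sopp := (@sopp R M B).

Lemma Triv_cancel A u : Triv (A ++ u ++ sopp u) -> Triv A.
Proof.
elim: u A => [|[b x] u IH] A; first by rewrite /= cats0.
move=> H; apply: IH; apply: (Triv_cancel1 Hcoh Hact (b := b) (x := x)).
apply: (Triv_perm _ H); apply/permP => p; rewrite /= /sopp /= !count_cat /= !count_cat /=; lia.
Qed.

Definition eqvT (u v : seq (B * M)) := Triv (u ++ sopp v).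

Lemma e_refl u : eqvT u u.
Proof. exact: (Triv_pairs Hact). Qed.
Lemma e_sym u v : eqvT u v -> eqvT v u.
Proof.
move=> /(Triv_opp Hact); rewrite sopp_cat soppK; apply: Triv_perm.
by rewrite perm_catC.
Qed.
Lemma e_trans u v w : eqvT u v -> eqvT v w -> eqvT u w.
Proof.
rewrite /eqvT => H1 H2; apply: (@Triv_cancel _ v).
apply: (Triv_perm _ (Triv_cat Hact H1 H2)).
by apply/permP => p; rewrite !count_cat; lia.
Qed.
Lemma e_acong x x' y y' : eqvT x x' -> eqvT y y' -> eqvT (x ++ y) (x' ++ y').
Proof.
rewrite /eqvT => H1 H2; apply: (Triv_perm _ (Triv_cat Hact H1 H2)).
by apply/permP => p; rewrite !sopp_cat !count_cat; lia.
Qed.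
Lemma e_ocong x x' : eqvT x x' -> eqvT (sopp x) (sopp x').
Proof. by move=> /(Triv_opp Hact); rewrite /eqvT sopp_cat. Qed.
Lemma e_aA x y w : eqvT (x ++ (y ++ w)) ((x ++ y) ++ w).
Proof. by rewrite /eqvT catA; apply: e_refl. Qed.
Lemma e_aC x y : eqvT (x ++ y) (y ++ x).
Proof.
apply: (Triv_perm _ (e_refl (x ++ y))).
by apply/permP => p; rewrite !sopp_cat !count_cat; lia.
Qed.
Lemma e_a0 x : eqvT ([::] ++ x) x.
Proof. exact: e_refl. Qed.
Lemma e_aN x : eqvT (sopp x ++ x) [::].
Proof.
apply: (Triv_perm _ (e_refl x)).
by apply/permP => p; rewrite !count_cat /sopp /=; lia.
Qed.

Definition TG := QZ e_refl e_sym e_trans e_acong e_ocong e_aA e_aC e_a0 e_aN.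
Definition tq (s : seq (B * M)) : TG :=
  qcl e_refl e_sym e_trans e_acong e_ocong e_aA e_aC e_a0 e_aN s.
Definition tbeta (b : B) (x : M) : TG := tq [:: (b, x)].

Lemma tq_cat s1 s2 : tq (s1 ++ s2) = tq s1 + tq s2.
Proof. exact: qcl_add. Qed.
Lemma tq_inj s t : tq s = tq t -> eqvT s t.
Proof. exact: qcl_inj. Qed.
Lemma tq_nil : tq [::] = 0.
Proof. exact: qcl_zero. Qed.

Lemma tbeta_bal : S_balanced act tbeta.
Proof.
have Hid : isEnd (@id M) by apply: rlin_id.
split; [|split].
- move=> a b x; rewrite /tbeta -tq_cat; apply: qcl_eq.
  exists 1%N, (fun _ => x),
    [:: ((a + b, x), (fun _ => id) : Rows M 1); ((a, - x), (fun _ v => - v) : Rows M 1);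
        ((b, - x), (fun _ v => - v) : Rows M 1)].
  split; first exact: perm_refl.
  split.
    move=> e; rewrite !inE => /orP [/eqP ->|/orP [] /eqP ->] /=; split;
      rewrite ?big_ord1 // => l; by [apply: rlin_id | apply: rlin_opp; apply: rlin_id].
  by move=> l; rewrite !big_cons big_nil /= addr0 !(actNr Hact) ?(act1 Hact) // -opprD subrr.
- move=> a x y; rewrite /tbeta -tq_cat; apply: qcl_eq.
  pose yv := fun l : 'I_2 => if val l == 0%N then x else y.
  exists 2%N, yv,
    [:: ((a, x + y), (fun _ => id) : Rows M 2);
        ((a, - x), (fun l => if val l == 0%N then (fun v => - v) else (fun _ => 0)) : Rows M 2);
        ((a, - y), (fun l => if val l == 0%N then (fun _ => 0) else (fun v => - v)) : Rows M 2)].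
  split; first exact: perm_refl.
  split.
    move=> e; rewrite !inE => /orP [/eqP ->|/orP [] /eqP ->] /=; split;
      rewrite ?big_ord_recl ?big_ord0 /= ?addr0 ?add0r ?oppr0 //;
      try (move=> l; case: ifP => _; by [apply: rlin_id | apply: rlin_zero | apply: rlin_opp; apply: rlin_id]).
  move=> [[|[|k]] Hk] //; rewrite !big_cons big_nil /= addr0.
    by rewrite (act0r Hact) addr0 (@actNr _ _ _ _ Hact a id Hid) (act1 Hact) subrr.
  by rewrite (act0r Hact) add0r (@actNr _ _ _ _ Hact a id Hid) (act1 Hact) subrr.
- move=> a s x Hs; rewrite /tbeta; apply: qcl_eq.
  exists 1%N, (fun _ => x),
    [:: ((act a s, x), (fun _ => id) : Rows M 1); ((a, - s x), (fun _ v => - s v) : Rows M 1)].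
  split; first exact: perm_refl.
  split.
    move=> e; rewrite !inE => /orP [] /eqP -> /=; split;
      rewrite ?big_ord1 // => l; by [apply: rlin_id | apply: rlin_opp].
  move=> l; rewrite !big_cons big_nil /= addr0 (actNr Hact) ?(act1 Hact) //.
  by rewrite subrr.
Qed.

Lemma tq_big I (r : seq I) (F : I -> B * M) :
  \sum_(i <- r) tq [:: F i] = tq (map F r).
Proof.
elim: r => [|i r IH]; first by rewrite big_nil tq_nil.
by rewrite big_cons IH -tq_cat.
Qed.

Lemma Triv_of_tz n (b : 'I_n -> B) (x : 'I_n -> M) :
  tensor_zero act b x -> Triv (map (fun k => (b k, x k)) (index_enum 'I_n)).
Proof.
move=> Htz; have := Htz TG tbeta tbeta_bal; rewrite /tbeta.
rewrite (tq_big _ (fun k => (b k, x k))) -tq_nil => /tq_inj.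
by rewrite /eqvT /= cats0.
Qed.
End TZ.


Section Bal.
Variables (R : nzRingType) (M : lmodType R^c).
Variables (A : zmodType) (act : A -> (M -> M) -> A) (G : zmodType) (beta : A -> M -> G).
Hypothesis Hb : S_balanced act beta.
Lemma bal0l v : beta 0 v = 0.
Proof.
case: Hb => H _; have := H 0 0 v; rewrite addr0.
by move=> /(congr1 (fun t => t - beta 0 v)); rewrite addrK subrr.
Qed.
Lemma bal0r u : beta u 0 = 0.
Proof.
case: Hb => _ [H _]; have := H u 0 0; rewrite addr0.
by move=> /(congr1 (fun t => t - beta u 0)); rewrite addrK subrr.
Qed.
Lemma bal_suml I (r : seq I) (F : I -> A) v :
  beta (\sum_(i <- r) F i) v = \sum_(i <- r) beta (F i) v.
Proof.
case: Hb => H _.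
exact: (big_morph (fun a => beta a v) (fun a b => H a b v) (bal0l v)).
Qed.
Lemma bal_sumr I (r : seq I) (F : I -> M) u :
  beta u (\sum_(i <- r) F i) = \sum_(i <- r) beta u (F i).
Proof.
case: Hb => _ [H _].
exact: (big_morph (fun x => beta u x) (H u) (bal0r u)).
Qed.
Lemma bal_act a s x : isEnd s -> beta (act a s) x = beta a (s x).
Proof. by case: Hb => _ [_ H]; apply: H. Qed.
End Bal.

Section Flat.
Variables (R : nzRingType) (M : lmodType R^c).
Local Notation Mn n := {ffun 'I_n -> M}.
Hypothesis Hcoh : forall n (rho : Mn n -> M), (0 < n)%N -> rlinear rho ->
  fin_M_gen M (fun y : Mn n => rho y = 0).

Lemma flat_of_coh : flat_left_S M.
Proof.
move=> A actA B actB f HA HB fD fact finj n a x Htz.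
have := Triv_of_tz Hcoh HB Htz; move=> [m [y [w [P [H S]]]]].
move=> G beta Hbeta.
have f0 : f 0 = 0.
  have := fD 0 0; rewrite addr0.
  by move=> /(congr1 (fun t => t - f 0)); rewrite addrK subrr.
have fsum : forall I (r : seq I) (F : I -> A), f (\sum_(i <- r) F i) = \sum_(i <- r) f (F i).
  by move=> I r F; apply: (big_morph f fD f0).
pose g := fun bb : B => match pselect (exists a0, f a0 = bb) with
  | left E => projT1 (cid E) | right _ => 0 end.
have fg : forall bb, (exists a0, f a0 = bb) -> f (g bb) = bb.
  move=> bb E; rewrite /g; case: pselect => [E'|NE]; [exact: (projT2 (cid E')) | by case: (NE E)].
have gK : forall a0, g (f a0) = a0 by move=> a0; apply: finj; apply: fg; exists a0.
have Hin : forall e, e \in w -> exists a0, f a0 = e.1.1.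
  move=> e He; have : e.1 \in map fst w by apply: map_f.
  by rewrite (perm_mem P) => /mapP [k _ Ek]; exists (a k); rewrite Ek.
transitivity (\sum_(p <- map (fun k => (f (a k), x k)) (index_enum 'I_n)) beta (g p.1) p.2).
  by rewrite big_map; apply: eq_bigr => k _; rewrite /= gK.
rewrite -(perm_big _ P) big_map.
rewrite (eq_big_seq (fun e => \sum_l beta (actA (g e.1.1) (e.2 l)) (y l))); last first.
  move=> e He; have [Hr Hx] := H e He; rewrite Hx (bal_sumr Hbeta).
  by apply: eq_bigr => l _; rewrite (bal_act Hbeta) //; exact: Hr.
rewrite exchange_big /= big1 // => l _; rewrite -(bal_suml Hbeta).
suff -> : \sum_(e <- w) actA (g e.1.1) (e.2 l) = 0 by apply: (bal0l Hbeta).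
apply: finj; rewrite f0 fsum -[RHS](S l); apply: eq_big_seq => e He.
by rewrite fact ?fg //; [exact: Hin | exact: ((H e He).1 l)].
Qed.
End Flat.


Section SubQ.
Variables (V : zmodType) (W : V -> Prop).
Hypothesis W0 : W 0.
Hypothesis WD : forall x y, W x -> W y -> W (x + y).
Hypothesis WN : forall x, W x -> W (- x).
Definition sqe (u v : V) := W (u - v).
Let W0' x : x = 0 -> W x. Proof. by move=> ->. Qed.
Lemma sq_refl u : sqe u u. Proof. by apply: W0'; rewrite subrr. Qed.
Lemma sq_sym u v : sqe u v -> sqe v u.
Proof. by move=> /WN; rewrite /sqe opprB. Qed.
Lemma sq_trans u v w : sqe u v -> sqe v w -> sqe u w.
Proof. by move=> H1 H2; have := WD H1 H2; rewrite /sqe addrA subrK. Qed.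
Lemma sq_acong x x' y y' : sqe x x' -> sqe y y' -> sqe (x + y) (x' + y').
Proof.
move=> H1 H2; have := WD H1 H2; rewrite /sqe opprD.
by rewrite addrACA.
Qed.
Lemma sq_ocong x x' : sqe x x' -> sqe (- x) (- x').
Proof. by move=> /WN; rewrite /sqe opprB opprK addrC. Qed.
Lemma sq_aA x y w : sqe (x + (y + w)) ((x + y) + w).
Proof. by apply: W0'; apply/eqP; rewrite subr_eq0 addrA. Qed.
Lemma sq_aC x y : sqe (x + y) (y + x).
Proof. by apply: W0'; apply/eqP; rewrite subr_eq0 addrC. Qed.
Lemma sq_a0 x : sqe (0 + x) x.
Proof. by apply: W0'; apply/eqP; rewrite subr_eq0 add0r. Qed.
Lemma sq_aN x : sqe (- x + x) 0.
Proof. by apply: W0'; rewrite addNr subr0. Qed.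
Definition SQ := QZ sq_refl sq_sym sq_trans sq_acong sq_ocong sq_aA sq_aC sq_a0 sq_aN.
Definition sqcl (v : V) : SQ := qcl sq_refl sq_sym sq_trans sq_acong sq_ocong sq_aA sq_aC sq_a0 sq_aN v.
Lemma sqcl_add u v : sqcl (u + v) = sqcl u + sqcl v.
Proof. exact: qcl_add. Qed.
Lemma sqcl0 : sqcl 0 = 0.
Proof. exact: qcl_zero. Qed.
Lemma sqcl_eq u v : W (u - v) -> sqcl u = sqcl v.
Proof. exact: qcl_eq. Qed.
Lemma sqcl_W u : sqcl u = 0 -> W u.
Proof.
rewrite -sqcl0 => H.
have := qcl_inj H; by rewrite /sqe subr0.
Qed.
Lemma sqcl_sum I (r : seq I) (F : I -> V) : sqcl (\sum_(i <- r) F i) = \sum_(i <- r) sqcl (F i).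
Proof. exact: (big_morph sqcl sqcl_add sqcl0). Qed.
End SubQ.

Section ES.
Variables (R : nzRingType) (M : lmodType R^c).
Variable (P : (M -> M) -> Prop).
Hypothesis P0 : P (fun _ => 0).
Hypothesis PD : forall s t, P s -> P t -> P (fun x => s x + t x).
Hypothesis PN : forall s, P s -> P (fun x => - s x).
Hypothesis PE : forall s, P s -> isEnd s.
Hypothesis PC : forall s t, P s -> isEnd t -> P (fun x => s (t x)).

Definition ESt := {s : M -> M | P s}.
Lemma ES_ext (u v : ESt) : (forall x, sval u x = sval v x) -> u = v.
Proof.
case: u v => [u Hu] [v Hv] /= E; have Euv := funext E; subst v.
by congr exist; apply: Prop_irrelevance.
Qed.
Definition es0 : ESt := exist _ _ P0.
Definition esadd (u v : ESt) : ESt := exist _ _ (PD (proj2_sig u) (proj2_sig v)).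
Definition esopp (u : ESt) : ESt := exist _ _ (PN (proj2_sig u)).
Lemma esaddA : associative esadd.
Proof. by move=> u v w; apply: ES_ext => x /=; rewrite addrA. Qed.
Lemma esaddC : commutative esadd.
Proof. by move=> u v; apply: ES_ext => x /=; rewrite addrC. Qed.
Lemma esadd0 : left_id es0 esadd.
Proof. by move=> u; apply: ES_ext => x /=; rewrite add0r. Qed.
Lemma esaddN : left_inverse es0 esopp esadd.
Proof. by move=> u; apply: ES_ext => x /=; rewrite addNr. Qed.
HB.instance Definition _ := gen_eqMixin ESt.
HB.instance Definition _ := gen_choiceMixin ESt.
HB.instance Definition _ := GRing.isZmodule.Build ESt esaddA esaddC esadd0 esaddN.
Definition ESZ : zmodType := ESt.
Definition esval (u : ESZ) : M -> M := sval u.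
Lemma esvalD (u v : ESZ) x : esval (u + v) x = esval u x + esval v x.
Proof. by []. Qed.
Lemma esvalP (u : ESZ) : P (esval u).
Proof. exact: proj2_sig u. Qed.
Lemma ESZ_ext (u v : ESZ) : (forall x, esval u x = esval v x) -> u = v.
Proof. exact: ES_ext. Qed.

Definition esact (a : ESZ) (s : M -> M) : ESZ :=
  match pselect (isEnd s) with
  | left H => (exist _ _ (PC (proj2_sig a) H) : ESt)
  | right _ => a end.
Lemma esactE a s : isEnd s -> forall x, esval (esact a s) x = esval a (s x).
Proof. by move=> H x; rewrite /esact; case: pselect. Qed.

Lemma esact_right : right_S_action esact.
Proof.
split; [|split; [|split]].
- by move=> a b s Hs; apply: ESZ_ext => x; rewrite esvalD !esactE // esvalD.
- move=> a s t Hs Ht; apply: ESZ_ext => x.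
  rewrite esvalD !esactE //; last exact: rlin_add.
  by rewrite (rlinD (PE (esvalP a))).
- move=> a s t Hs Ht; apply: ESZ_ext => x.
  by rewrite !esactE //; exact: rlin_comp.
- by move=> a; apply: ESZ_ext => x; rewrite esactE //; exact: rlin_id.
Qed.
End ES.


Lemma choiceP X Y (P : X -> Y -> Prop) :
  (forall x, exists y, P x y) -> exists f, forall x, P x (f x).
Proof. by move=> H; have [f Hf] := choice H; exists f. Qed.

Section Part1.
Variables (R : nzRingType) (M : lmodType R^c).
Local Notation Mn n := {ffun 'I_n -> M}.

Lemma coh_of_flat : S_right_coherent M -> flat_left_S M -> M_coherent M (fun _ : M => True).
Proof.
move=> HS HF; split.
  exists 1%N; split => //; exists (fun z : Mn 1 => z ord0); split; first exact: rlin_coord.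
  by move=> y; split => // _; exists [ffun => y]; rewrite ffunE.
move=> n rho npos Hrho _.
pose g := fun (j : 'I_n) (x : M) => rho (delta j x).
have Hg : forall j, isEnd (g j) by move=> j; exact: (rlin_compf Hrho (rlin_delta j)).
have Hrg : forall z, rho z = \sum_j g j (z j) by move=> z; exact: rho_sum.
have [k' [g' [Hg' [Hiff [m [pv [Hpv Hpres]]]]]]] := HS n g Hg.
pose e := fun (k : nat) (j : 'I_k) (i : 'I_k) => if i == j then (@id M) else (fun _ => 0 : M).
have He : forall k (j i : 'I_k), isEnd (e k j i).
  by move=> k j i; rewrite /e; case: eqP => _; [exact: rlin_id | exact: rlin_zero].
have gen_self : forall k (h : 'I_k -> M -> M) j, (forall i, isEnd (h i)) -> right_ideal_gen h (h j).
  move=> k h j Hh; exists (e k j); split; first exact: He.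
  move=> x; rewrite (bigD1 j) //= /e eqxx big1 ?addr0 // => i /negPf ->.
  exact: (rlin0 (Hh i)).
have [d Hd] := choiceP (fun i => (Hiff (g' i)).2 (gen_self _ g' i Hg')).
have Hrel : forall l x, \sum_i g' i (pv l i x) = 0.
  move=> l x; apply: ((Hpres (pv l) (Hpv l)).2); exists (e m l); split; first exact: He.
  move=> i y; rewrite (bigD1 l) //= /e eqxx big1 ?addr0 // => l' /negPf ->.
  exact: (rlin0 (Hpv l' i)).
pose Pid := fun s : M -> M => isEnd s /\ right_ideal_gen g s.
have Pid0 : Pid (fun _ => 0).
  split; first exact: rlin_zero.
  exists (fun _ _ => 0); split; first by move=> j; exact: rlin_zero.
  by move=> x; rewrite big1 // => j _; exact: (rlin0 (Hg j)).
have PidD : forall s t, Pid s -> Pid t -> Pid (fun x => s x + t x).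
  move=> s t [Hs [u [Hu Hsu]]] [Ht [u' [Hu' Htu]]]; split; first exact: (rlin_add Hs Ht).
  exists (fun j x => u j x + u' j x); split; first by move=> j; exact: (rlin_add (Hu j) (Hu' j)).
  by move=> x; rewrite Hsu Htu -big_split; apply: eq_bigr => j _; rewrite (rlinD (Hg j)).
have PidN : forall s, Pid s -> Pid (fun x => - s x).
  move=> s [Hs [u [Hu Hsu]]]; split; first exact: (rlin_opp Hs).
  exists (fun j x => - u j x); split; first by move=> j; exact: (rlin_opp (Hu j)).
  by move=> x; rewrite Hsu -sumrN; apply: eq_bigr => j _; rewrite (rlinN (Hg j)).
have PidE : forall s, Pid s -> isEnd s by move=> s [].
have PidC : forall s t, Pid s -> isEnd t -> Pid (fun x => s (t x)).
  move=> s t [Hs [u [Hu Hsu]]] Ht; split; first exact: (rlin_comp Hs Ht).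
  exists (fun j x => u j (t x)); split; first by move=> j; exact: (rlin_comp (Hu j) Ht).
  by move=> x; rewrite Hsu.
have E0 : isEnd (fun _ : M => 0 : M) by exact: rlin_zero.
have ED : forall s t : M -> M, isEnd s -> isEnd t -> isEnd (fun x => s x + t x) by move=> s t Hs Ht; exact: (rlin_add Hs Ht).
have EN : forall s : M -> M, isEnd s -> isEnd (fun x => - s x) by move=> s Hs; exact: (rlin_opp Hs).
have EE : forall s : M -> M, isEnd s -> isEnd s by [].
have EC : forall s t : M -> M, isEnd s -> isEnd t -> isEnd (fun x => s (t x)) by move=> s t Hs Ht; exact: (rlin_comp Hs Ht).
pose AZ := ESZ Pid0 PidD PidN.
pose BZ := ESZ E0 ED EN.
pose actA := esact PidC : AZ -> (M -> M) -> AZ.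
pose actB := esact EC : BZ -> (M -> M) -> BZ.
have HA : right_S_action actA by exact: esact_right.
have HB : right_S_action actB by exact: esact_right.
pose f := fun a : AZ => (exist _ (esval a) (PidE _ (esvalP a)) : BZ).
have fD : forall a b, f (a + b) = f a + f b by move=> a b; apply: ESZ_ext.
have fact : forall a s, isEnd s -> f (actA a s) = actB (f a) s.
  by move=> a s Hs; apply: ESZ_ext => x /=; rewrite /f /= !esactE.
have finj : injective f.
  move=> a b E; apply: ESZ_ext => x; have := congr1 (fun u : BZ => esval u x) E; by [].
pose aj := fun j => (exist _ (g j) (conj (Hg j) (gen_self _ g j Hg)) : AZ).
have [rt Hrt] := choiceP (fun a : AZ => (Hiff _).1 (esvalP a).2).
pose c := fun j => rt (aj j).
have Hc : forall j, (forall i, isEnd (c j i)) /\ forall x, g j x = \sum_i g' i (c j i x).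
  by move=> j; exact: (Hrt (aj j)).
have key1 : forall Y : 'I_k' -> M, \sum_j g j (\sum_i d i j (Y i)) = \sum_i g' i (Y i).
  move=> Y; under eq_bigr do rewrite (rlin_sum (Hg _)).
  rewrite exchange_big /=; apply: eq_bigr => i _; by rewrite ((Hd i).2 (Y i)).
have key2 : forall zz : 'I_n -> M, \sum_i g' i (\sum_j c j i (zz j)) = \sum_j g j (zz j).
  move=> zz; under eq_bigr do rewrite (rlin_sum (Hg' _)).
  rewrite exchange_big /=; apply: eq_bigr => j _; by rewrite ((Hc j).2 (zz j)).
have key3 : forall ww : 'I_m -> M, \sum_i g' i (\sum_l pv l i (ww l)) = 0.
  move=> ww; under eq_bigr do rewrite (rlin_sum (Hg' _)).
  by rewrite exchange_big /= big1 // => l _; apply: Hrel.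
pose phi := fun Z : Mn (n + m) => [ffun j => Z (lshift m j)
   - \sum_i d i j (\sum_(j' < n) c j' i (Z (lshift m j')))
   + \sum_i d i j (\sum_(l < m) pv l i (Z (rshift n l)))].
exists (n + m)%N; split; first by rewrite addn_gt0 npos.
exists phi; split.
  apply: rlin_ffun => j; apply: rlin_add; [apply: rlin_sub|].
  - exact: (rlin_coord (lshift m j)).
  - apply: rlin_sumf => i; apply: (rlin_compf ((Hd i).1 j)).
    apply: rlin_sumf => j'; exact: (rlin_compf ((Hc j').1 i) (rlin_coord (lshift m j'))).
  - apply: rlin_sumf => i; apply: (rlin_compf ((Hd i).1 j)).
    apply: rlin_sumf => l; exact: (rlin_compf (Hpv l i) (rlin_coord (rshift n l))).
move=> y; split; last first.
  move=> [Z <-]; rewrite Hrg.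
  under eq_bigr do rewrite ffunE (rlinD (Hg _)) (rlinB (Hg _)).
  rewrite big_split sumrB /=.
  rewrite (key1 (fun i => \sum_(j' < n) c j' i (Z (lshift m j')))).
  rewrite (key1 (fun i => \sum_(l < m) pv l i (Z (rshift n l)))).
  by rewrite key2 key3 subrr addr0.
move=> Hy.
pose one := (exist _ id (@rlin_id _ M) : BZ).
have TZB : tensor_zero actB (fun j => f (aj j)) y.
  move=> G beta Hbeta.
  have Ef : forall j, f (aj j) = actB one (g j).
    by move=> j; apply: ESZ_ext => x; rewrite /actB esactE.
  rewrite (eq_bigr (fun j => beta one (g j (y j)))); last first.
    by move=> j _; rewrite Ef (bal_act Hbeta).
  by rewrite -(bal_sumr Hbeta) -Hrg Hy (bal0r Hbeta).
have TZA := HF AZ actA BZ actB f HA HB fD fact finj n aj y TZB.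
pose Wsub := fun u : Mn k' => exists w : Mn m, forall i, u i = \sum_l pv l i (w l).
have W0 : Wsub 0.
  exists 0 => i; rewrite ffun0M big1 // => l _; rewrite ffun0M; exact: (rlin0 (Hpv l i)).
have WD : forall u v, Wsub u -> Wsub v -> Wsub (u + v).
  move=> u v [w1 H1] [w2 H2]; exists (w1 + w2) => i.
  rewrite ffunDM H1 H2 -big_split; apply: eq_bigr => l _; by rewrite ffunDM (rlinD (Hpv l i)).
have WN : forall u, Wsub u -> Wsub (- u).
  move=> u [w1 H1]; exists (- w1) => i.
  rewrite ffunNM H1 -sumrN; apply: eq_bigr => l _; by rewrite ffunNM (rlinN (Hpv l i)).
have relW : forall t : 'I_k' -> M -> M, (forall i, isEnd (t i)) ->
    (forall x, \sum_i g' i (t i x) = 0) -> forall x, Wsub [ffun i => t i x].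
  move=> t Ht Hrelt x; have [u [Hu Htu]] := (Hpres t Ht).1 Hrelt.
  by exists [ffun l => u l x] => i; rewrite ffunE Htu; apply: eq_bigr => l _; rewrite ffunE.
pose beta2 := fun (a : AZ) (x : M) => sqcl W0 WD WN [ffun i => rt a i x].
have Hbal2 : S_balanced actA beta2.
  split; [|split].
  - move=> a b x; rewrite /beta2 -sqcl_add; apply: sqcl_eq.
    have -> : [ffun i => rt (a + b) i x] - ([ffun i => rt a i x] + [ffun i => rt b i x])
        = [ffun i => (fun v => rt (a + b) i v - (rt a i v + rt b i v)) x].
      by apply/ffunP => i; rewrite ffunBM ffunDM !ffunE.
    apply: (relW (fun i v => rt (a + b) i v - (rt a i v + rt b i v))).
      move=> i; apply: rlin_sub; first exact: ((Hrt (a + b)).1 i).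
      exact: (rlin_add ((Hrt a).1 i) ((Hrt b).1 i)).
    move=> v; under eq_bigr do rewrite (rlinB (Hg' _)) (rlinD (Hg' _)).
    rewrite sumrB big_split /= -(Hrt (a + b)).2 -(Hrt a).2 -(Hrt b).2.
    by rewrite esvalD subrr.
  - move=> a x y'; rewrite /beta2 -sqcl_add; congr sqcl.
    by apply/ffunP => i; rewrite ffunDM !ffunE (rlinD ((Hrt a).1 i)).
  - move=> a s x Hs; rewrite /beta2; apply: sqcl_eq.
    have -> : [ffun i => rt (actA a s) i x] - [ffun i => rt a i (s x)]
        = [ffun i => (fun v => rt (actA a s) i v - rt a i (s v)) x].
      by apply/ffunP => i; rewrite ffunBM !ffunE.
    apply: (relW (fun i v => rt (actA a s) i v - rt a i (s v))).
      move=> i; apply: rlin_sub; first exact: ((Hrt (actA a s)).1 i).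
      exact: (rlin_comp ((Hrt a).1 i) Hs).
    move=> v; under eq_bigr do rewrite (rlinB (Hg' _)).
    rewrite sumrB -(Hrt (actA a s)).2 -(Hrt a).2.
    by rewrite /actA esactE // subrr.
have := TZA _ beta2 Hbal2; rewrite /beta2 -(@sqcl_sum _ _ W0 WD WN) => H0; have [w Hw] := sqcl_W H0.
exists [ffun p => match split p with inl j => y j | inr l => w l end].
apply/ffunP => j; rewrite /phi ffunE.
have sl : forall j', split (lshift m j') = inl j' := fun j' => unsplitK (inl _ j').
have sr : forall l, split (rshift n l) = inr l := fun l => unsplitK (inr _ l).
rewrite ffunE sl.
under [X in _ - X + _]eq_bigr do under eq_bigr do rewrite ffunE sl.
under [X in _ - _ + X]eq_bigr do under eq_bigr do rewrite ffunE sr.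
rewrite [X in _ - X + _](eq_bigr (fun i => d i j (\sum_(l < m) pv l i (w l)))) ?subrK //.
move=> i _; congr (d i j); rewrite -Hw sum_ffunE; apply: eq_bigr => j' _; by rewrite ffunE.
Qed.

End Part1.


Theorem mainTheorem14 (R : nzRingType) (M : lmodType R^c) :
  ((S_right_coherent M /\ flat_left_S M) -> @M_coherent R M M (fun _ : M => True)) /\
  (intrinsically_projective M ->
     ((S_right_coherent M /\ flat_left_S M) <-> @M_coherent R M M (fun _ : M => True))).
Proof.
have P1 : (S_right_coherent M /\ flat_left_S M) -> @M_coherent R M M (fun _ : M => True).
  by move=> [HS HF]; exact: coh_of_flat.
split => // HIP; split => // Hc.
have Hcoh : forall n (rho : {ffun 'I_n -> M} -> M), (0 < n)%N -> rlinear rho ->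
    fin_M_gen M (fun y : {ffun 'I_n -> M} => rho y = 0).
  by move=> n rho Hn Hr; exact: (Hc.2 n rho Hn Hr (fun _ => I)).
split; [exact: (S_coh_of Hcoh HIP) | exact: (flat_of_coh Hcoh)].
Qed.
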